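(* Let $G$ be a complete edge-colored permutation graph. Then the quotient graph $G[M]/\mathbb{P}_{\max}(M)$ of each strong prime module $M$ of $G$ is a complete edge-colored permutation graph. In particular, for every strong prime module $M$ with $|M|\ge 3$, the quotient graph $G[M]/\mathbb{P}_{\max}(M)$ is $2$-edge-colored.
   Context: A complete $k$-edge-colored graph $G=(V,E_1,\dots,E_k)$ is the complete graph on a finite set $V$ with edges partitioned into $k$ nonempty color classes $E_i$ (the one-vertex graph also counts); $G_{|i}=(V,E_i)$. A labeling is a bijection $\ell:V\to\{1,\dots,|V|\}$. A graph $(V,E)$ with labeling $\ell$ is a simple permutation graph of a permutation $\pi$ if for all $u,v$ with $\ell(u)>\ell(v)$: $\{u,v\}\in E$ iff $\pi^{-1}(\ell(u))<\pi^{-1}(\ell(v))$. $G$ is a complete edge-colored permutation graph if there exist a labeling $\ell$ and permutations $\pi_1,\dots,\pi_k$ with $(G_{|i},\ell)$ a simple permutation graph of $\pi_i$ for all $i$. A module is a set $M\subseteq V$ such that for every $v\notin M$ all edges $\{u,v\}$, $u\in M$, have the same color; a strong module is a nonempty module comparable by inclusion or disjoint with every other module. For a strong module $M$ with $|M|\ge2$, $\mathbb{P}_{\max}(M)$ is the set of inclusion-maximal strong modules properly contained in $M$, and $G[M]/\mathbb{P}_{\max}(M)$ is the complete graph on $\mathbb{P}_{\max}(M)$ with $\{M_a,M_b\}$ colored by the common color of all edges between $M_a$ and $M_b$; for $|M|=1$ it is the one-vertex graph. A strong module is series if its quotient graph has at least two vertices and all its edges have one color, and prime otherwise. *)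

(* Defs.v *)
From mathcomp Require Import all_boot all_fingroup.
Set Implicit Arguments. Unset Strict Implicit. Unset Printing Implicit Defensive.

(* A complete k-edge-colored graph on the finite vertex type V is given by an
   edge coloring c : V -> V -> 'I_k (only values c u v with u != v matter).
   Edge {u,v} has color i iff c u v = i. *)
Definition complete_colored (V : finType) (k : nat) (c : V -> V -> 'I_k) : Prop :=
  0 < #|V| /\
  (forall u v : V, u != v -> c u v = c v u) /\
  (1 < #|V| -> forall i : 'I_k, exists u v : V, u != v /\ c u v = i).

(* (W, E) with labeling l is a simple permutation graph of pi
   (labels are 0-based: 'I_#|W| instead of {1..|W|}). *)
Definition simple_perm_graph (W : finType) (E : rel W) (l : W -> 'I_#|W|)
    (pi : 'S_#|W|) : Prop :=
  forall u v : W, l v < l u -> E u v = ((pi^-1)%g (l u) < (pi^-1)%g (l v)).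

Definition edge_colored_perm_graph (W : finType) (C : Type) (E : C -> rel W) : Prop :=
  exists l : W -> 'I_#|W|, bijective l /\
    forall i : C, exists pi : 'S_#|W|, simple_perm_graph (E i) l pi.

Section Modules.
Variables (V : finType) (k : nat) (c : V -> V -> 'I_k).

Definition is_module (M : {set V}) : bool :=
  [forall v, (v \notin M) ==> [forall u in M, forall u' in M, c u v == c u' v]].

Definition strong_module (M : {set V}) : bool :=
  [&& M != set0, is_module M &
  [forall M' : {set V}, is_module M' ==>
    [|| M \subset M', M' \subset M | [disjoint M & M']]]].

Definition Pmax (M : {set V}) : {set {set V}} :=
  [set N : {set V} | [&& strong_module N, N \proper M &
     [forall N' : {set V}, [&& strong_module N', N' \proper M & N \subset N'] ==> (N' == N)]]].

(* vertex set of G[M]/P_max(M): P_max(M) if |M| >= 2, the one-vertex graph {M}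
   if |M| = 1 *)
Definition qverts (M : {set V}) : {set {set V}} :=
  if 1 < #|M| then Pmax M else [set M].

Definition qvert (M : {set V}) := {X : {set V} | X \in qverts M}.

Definition qedge (M : {set V}) (i : 'I_k) : rel (qvert M) :=
  fun A B => [forall u in val A, forall v in val B, c u v == i].

Definition series_module (M : {set V}) : Prop :=
  strong_module M /\ 2 <= #|qverts M| /\
  exists i : 'I_k, forall A B : qvert M, A != B -> qedge i A B.

Definition prime_module (M : {set V}) : Prop :=
  strong_module M /\ ~ series_module M.

Definition qcolors (M : {set V}) : {set 'I_k} :=
  [set i : 'I_k | [exists A : qvert M, exists B : qvert M, (A != B) && qedge i A B]].

End Modules.

(* Main.v *)
Require Import Defs.
From mathcomp Require Import all_boot all_fingroup.
From Stdlib Require Import Classical Lia.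
From mathcomp Require Import zify.
Set Implicit Arguments. Unset Strict Implicit. Unset Printing Implicit Defensive.

Lemma min_exists (T : Type) (P : T -> Prop) (f : T -> nat) x :
  P x -> exists y, P y /\ forall z, P z -> f y <= f z.
Proof.
move: {2}(f x) (leqnn (f x)) => n; elim: n x => [|n IH] x hx Px.
  by exists x; split=> // z _; move: hx; rewrite leqn0 => /eqP ->.
case: (classic (exists z, P z /\ f z < f x)) => [[z [Pz lt]]|nz].
  by apply: (IH z) => //; rewrite -ltnS; apply: leq_trans lt hx.
exists x; split=> // z Pz; rewrite leqNgt; apply/negP => lt; apply: nz; by exists z.
Qed.

Section Gallai.
Variables (W : finType) (K : eqType) (col : W -> W -> K).
Hypothesis sym : forall x y, x != y -> col x y = col y x.
Hypothesis nr : forall x y z, x != y -> y != z -> x != z ->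
  [|| col x y == col x z, col x y == col y z | col x z == col y z].

Definition closedin (i : K) (Y S : {set W}) :=
  forall x y, x \in S -> y \in Y -> y \notin S -> col x y != i.
Definition conn (i : K) (X : {set W}) :=
  forall S : {set W}, S \subset X -> S != set0 -> S != X ->
    exists x y, [/\ x \in S, y \in X, y \notin S & col x y = i].

Lemma closed_compl i (Y S : {set W}) : closedin i Y S -> closedin i Y (Y :\: S).
Proof.
move=> cS x y; rewrite !inE => /andP [xS xY] yY; rewrite yY andbT negbK => yS.
rewrite sym; first exact: cS.
by apply/eqP => e; move: xS; rewrite e yS.
Qed.

Lemma closed_inter i (Y S T : {set W}) : closedin i Y S -> closedin i Y T -> closedin i Y (S :&: T).
Proof.
move=> cS cT x y; rewrite !inE => /andP [xS xT] yY; rewrite negb_and => /orP [] ?.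
  exact: cS. exact: cT.
Qed.

Lemma closed_full i (Y : {set W}) : closedin i Y Y.
Proof. by move=> x y _ ->. Qed.

Definition iscomp i (Y D : {set W}) (x : W) (S : {set W}) := [/\ x \in S, S \subset D, closedin i Y S &
  forall S' : {set W}, x \in S' -> S' \subset D -> closedin i Y S' -> #|S| <= #|S'|].

Lemma comp_exists i (Y D : {set W}) x : x \in D -> closedin i Y D -> exists S, iscomp i Y D x S.
Proof.
move=> xD cD.
have [S [[xS SD cS] mS]] := @min_exists _
  (fun S : {set W} => [/\ x \in S, S \subset D & closedin i Y S]) (fun S : {set W} => #|S|) D
  (And3 xD (subxx D) cD).
exists S; split=> // S' xS' S'D cS'; exact: mS.
Qed.

Lemma comp_sub_min i (Y D : {set W}) x (S S' : {set W}) : iscomp i Y D x S -> x \in S' -> S' \subset S ->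
  closedin i Y S' -> S' = S.
Proof.
case=> xS SD cS mS xS' sub cS'; apply/eqP; rewrite eqEcard sub /=.
apply: mS => //; exact: subset_trans sub SD.
Qed.

Lemma comp_split i (Y D : {set W}) x (S T : {set W}) a b : iscomp i Y D x S -> a \in S -> a \in T ->
  b \in S -> b \notin T ->
  exists a' b', [/\ a' \in S, a' \in T, b' \in S, b' \notin T & col a' b' = i].
Proof.
move=> cp aS aT bS bT; apply: NNPP => H.
have H' : forall a' b', a' \in S -> a' \in T -> b' \in S -> b' \notin T -> col a' b' != i.
  move=> a' b' ? ? ? ?; apply/negP => /eqP e; apply: H; by exists a', b'.
case: (cp) => xS SD cS mS.
have c1 : closedin i Y (S :&: T).
  move=> u y; rewrite !inE => /andP [uS uT] yY; rewrite negb_and => /orP [yS|yT].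
    exact: cS.
  case yS': (y \in S); first exact: H'.
  by apply: cS => //; rewrite yS'.
have c2 : closedin i Y (S :\: T).
  move=> u y; rewrite !inE => /andP [uT uS] yY; rewrite negb_and negbK => /orP [yT|yS].
    case yS': (y \in S); last by apply: cS => //; rewrite yS'.
    rewrite sym; first exact: H'.
    by apply/eqP => e; move: uT; rewrite e yT.
  exact: cS.
case xT: (x \in T).
  have xST : x \in S :&: T by rewrite inE xS xT.
  have e := comp_sub_min cp xST (subsetIl S T) c1.
  by move: bS; rewrite -e inE (negbTE bT) andbF.
have xST : x \in S :\: T by rewrite inE xS xT.
have e := comp_sub_min cp xST (subsetDl S T) c2.
by move: aS; rewrite -e inE aT.
Qed.

Lemma comp_homog i (Y D : {set W}) x (S : {set W}) y a a' : iscomp i Y D x S ->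
  y \in Y -> y \notin S -> a \in S -> a' \in S -> col a y = col a' y.
Proof.
move=> cp yY yS aS a'S; apply/eqP; apply: contraT => ne.
have h1 : a \in [set z | col z y == col a y] by rewrite inE.
have h2 : a' \notin [set z | col z y == col a y] by rewrite inE eq_sym.
have [a1 [b1 [a1S a1T b1S b1T e]]] := comp_split cp aS h1 a'S h2.
case: cp => _ _ cS _.
rewrite inE in a1T; rewrite inE in b1T.
have n1 : a1 != b1 by apply/eqP => e1; move: b1T; rewrite -e1 a1T.
have n2 : b1 != y by apply/eqP => e1; move: yS; rewrite -e1 b1S.
have n3 : a1 != y by apply/eqP => e1; move: yS; rewrite -e1 a1S.
have := nr n1 n2 n3; rewrite e.
have c1 := cS _ _ a1S yY yS; have c2 := cS _ _ b1S yY yS.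
rewrite (eqP a1T) in c1.
rewrite eq_sym (negbTE (cS _ _ a1S yY yS)) eq_sym (negbTE c2) (eqP a1T) /=.
by rewrite eq_sym (negbTE b1T).
Qed.

Lemma conn_get i (X : {set W}) v : conn i X -> v \in X -> 1 < #|X| ->
  exists w, w \in X :\ v /\ col v w = i.
Proof.
move=> cX vX X1.
have h1 : [set v] \subset X by rewrite sub1set.
have h2 : [set v] != set0 by apply/set0Pn; exists v; rewrite inE.
have h3 : [set v] != X by apply/eqP => e; move: X1; rewrite -e cards1.
have [x [y [xv yX yv e]]] := cX _ h1 h2 h3.
move: xv; rewrite inE => /eqP xv; subst x.
by exists y; rewrite !inE yX andbT; rewrite inE in yv.
Qed.

Lemma closed_getv r (X : {set W}) v (S : {set W}) : v \in X -> conn r X -> S \subset X :\ v ->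
  closedin r (X :\ v) S -> forall s, s \in S -> exists a, a \in S /\ col v a = r.
Proof.
move=> vX cX SY cS s sS.
have h1 : S \subset X by apply: subset_trans SY (subsetDl _ _).
have h2 : S != set0 by apply/set0Pn; exists s.
have h3 : S != X.
  apply/eqP => eSX; move: (subsetP SY v); rewrite eSX vX !inE eqxx => /(_ isT) //.
have [x [y [xS yX yS e]]] := cX _ h1 h2 h3.
case: (eqVneq y v) => [eyv|nyv].
  subst y; exists x; split=> //; rewrite sym //.
  by apply/eqP => e1; move: (subsetP SY x xS); rewrite e1 !inE eqxx.
by move: (cS x y xS); rewrite !inE nyv yX => /(_ isT yS); rewrite e eqxx.
Qed.

Lemma tri_get r s (Y S : {set W}) v x y : v \notin Y -> closedin r Y S -> S \subset Y ->
  x \in S -> y \in Y -> y \notin S -> col v x = s -> col v y = r -> s != r ->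
  col x y = s.
Proof.
move=> vY cS SY xS yY yS vx vy sr.
have xY := subsetP SY x xS.
have n1 : v != x by apply/eqP => e; move: vY; rewrite e xY.
have n2 : x != y by apply/eqP => e; move: yS; rewrite -e xS.
have n3 : v != y by apply/eqP => e; move: vY; rewrite e yY.
have := nr n1 n2 n3; rewrite vx vy (negbTE sr) /= => /orP [/eqP //|].
by rewrite eq_sym (negbTE (cS _ _ xS yY yS)).
Qed.

Lemma core p q r (X : {set W}) v (Z : {set W}) : p != q -> p != r -> q != r ->
  v \in X -> 1 < #|X| -> conn p X -> conn q X -> conn r X ->
  Z \subset X :\ v -> Z != set0 -> Z != X :\ v -> closedin r (X :\ v) Z -> False.
Proof.
set Y := X :\ v => pq pr qr vX X1 cp cq cr ZY Z0 ZnY cZ.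
have vY : v \notin Y by rewrite !inE eqxx.
have [w [wY vw]] := conn_get cp vX X1.
have [w' [w'Y vw']] := conn_get cq vX X1.
have [A cpA] := comp_exists wY (@closed_full r Y).
case: (cpA) => wA AY cA mA.
have [a [aA va]] := closed_getv vX cr AY cA wA.
have step : forall u, u \in Y -> u \notin A -> exists C c,
    [/\ iscomp r Y (Y :\: A) u C, c \in C, col v c = r & col w c = p].
  move=> u uY uA.
  have uD : u \in Y :\: A by rewrite inE uA.
  have [C cpC] := comp_exists uD (closed_compl cA).
  case: (cpC) => uC CD clC mC.
  have CY : C \subset Y := subset_trans CD (subsetDl _ _).
  have [c [cC vc]] := closed_getv vX cr CY clC uC.
  have cD := subsetP CD c cC; rewrite inE in cD; case/andP: cD => cnA cY.
  exists C, c; split=> //.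
  exact: (tri_get vY cA AY wA cY cnA vw vc pr).
case w'A: (w' \in A).
  have [u uY uA] : exists2 u, u \in Y & u \notin A.
    case wZ: (w \in Z).
      have sub : A :&: Z \subset A := subsetIl _ _.
      have wAZ : w \in A :&: Z by rewrite inE wA wZ.
      have e := comp_sub_min cpA wAZ sub (closed_inter cA cZ).
      have : Z \proper Y by rewrite properEneq ZnY ZY.
      case/properP => _ [u uY uZ]; exists u => //.
      apply/negP => uA; rewrite -e inE in uA; case/andP: uA => _ uZ'.
      by rewrite uZ' in uZ.
    case/set0Pn: Z0 => u uZ; exists u; first by apply: (subsetP ZY).

    have wYZ : w \in A :&: (Y :\: Z).
      by apply/setIP; split => //; apply/setDP; split => //; rewrite wZ.
    have e := comp_sub_min cpA wYZ (subsetIl _ _) (closed_inter cA (closed_compl cZ)).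
    apply/negP => uA; move: uA; rewrite -e => /setIP [_ /setDP [_]].
    by rewrite uZ.
  have [C [c [cpC cC vc wc]]] := step u uY uA.
  case: (cpC) => _ CD _ _.
  have cD := subsetP CD c cC; rewrite inE in cD; case/andP: cD => cnA cY.
  have w'c := tri_get vY cA AY w'A cY cnA vw' vc qr.
  have := comp_homog cpA cY cnA wA w'A; rewrite wc w'c => /eqP; by rewrite (negbTE pq).
have [C [c [cpC cC vc wc]]] := step w' w'Y (negbT w'A).
case: (cpC) => w'C CD cC' _.
have CY : C \subset Y := subset_trans CD (subsetDl _ _).
have cD := subsetP CD c cC; rewrite inE in cD; case/andP: cD => cnA cY.
have aY := subsetP AY a aA.
have aC : a \notin C by apply/negP => aC; move: (subsetP CD a aC); rewrite inE aA.
have w'a := tri_get vY cC' CY w'C aY aC vw' va qr.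
have e1 := comp_homog cpA cY cnA aA wA.
have e2 := comp_homog cpC aY aC w'C cC.
have ac : a != c by apply/eqP => e; move: cnA; rewrite -e aA.
move: e2; rewrite w'a -(sym ac) e1 wc => /eqP; by rewrite eq_sym (negbTE pq).
Qed.

Lemma notconn i (Y : {set W}) : ~ conn i Y ->
  exists Z : {set W}, [/\ Z \subset Y, Z != set0, Z != Y & closedin i Y Z].
Proof.
move=> nc; apply: NNPP => H; apply: nc => S SY S0 SnY; apply: NNPP => H2.
apply: H; exists S; split=> // x y xS yY yS; apply/negP => /eqP e.
by apply: H2; exists x, y.
Qed.

Lemma gallai n : forall (X : {set W}) p q r, #|X| <= n -> 1 < #|X| ->
  p != q -> p != r -> q != r -> conn p X -> conn q X -> conn r X -> False.
Proof.
elim: n => [|n IH] X p q r hn h1 pq pr qr cp cq cr.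
  by move: (leq_trans h1 hn).
have : X != set0 by rewrite -card_gt0; apply: ltnW.
case/set0Pn => v vX.
have hc := cardsD1 v X; rewrite vX add1n in hc.
case: (leqP #|X :\ v| 1) => hY.
  have [w [wY vw]] := conn_get cp vX h1.
  have [w' [w'Y vw']] := conn_get cq vX h1.
  have e := card_le1_eqP hY w w' wY w'Y.
  by move: pq; rewrite -vw -vw' e eqxx.
have hn' : #|X :\ v| <= n by rewrite -ltnS -hc.
case: (classic (conn r (X :\ v))) => cr'.
  case: (classic (conn q (X :\ v))) => cq'.
    case: (classic (conn p (X :\ v))) => cp'.
      exact: (IH (X :\ v) p q r).
    have [Z [ZY Z0 ZnY cZ]] := notconn cp'.
    by apply: (core (p:=q) (q:=r) (r:=p) _ _ _ vX h1 cq cr cp ZY Z0 ZnY cZ);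
      rewrite // eq_sym.
  have [Z [ZY Z0 ZnY cZ]] := notconn cq'.
  by apply: (core (p:=p) (q:=r) (r:=q) _ _ _ vX h1 cp cr cq ZY Z0 ZnY cZ);
    rewrite // eq_sym.
have [Z [ZY Z0 ZnY cZ]] := notconn cr'.
exact: (core pq pr qr vX h1 cp cq cr ZY Z0 ZnY cZ).
Qed.

End Gallai.


Section Mod.
Variables (V : finType) (k : nat) (c : V -> V -> 'I_k).
Hypothesis csym : forall u v, u != v -> c u v = c v u.

Lemma moduleP (M : {set V}) : is_module c M ->
  forall v u u', v \notin M -> u \in M -> u' \in M -> c u v = c u' v.
Proof.
move/forallP => H v u u' vM uM u'M; move: (H v); rewrite vM /=.
by move/forall_inP/(_ u uM)/forall_inP/(_ u' u'M)/eqP.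
Qed.

Lemma moduleI (M : {set V}) :
  (forall v u u', v \notin M -> u \in M -> u' \in M -> c u v = c u' v) -> is_module c M.
Proof.
move=> H; apply/forallP => v; apply/implyP => vM.
apply/forall_inP => u uM; apply/forall_inP => u' u'M; apply/eqP; exact: H.
Qed.

Lemma strongP (N : {set V}) : strong_module c N ->
  [/\ N != set0, is_module c N & forall M', is_module c M' ->
     [|| N \subset M', M' \subset N | [disjoint N & M']]].
Proof.
case/and3P => n0 mN /forallP H; split=> // M' mM'; exact: (implyP (H M') mM').
Qed.

Lemma strongI (N : {set V}) : N != set0 -> is_module c N ->
  (forall M', is_module c M' -> [|| N \subset M', M' \subset N | [disjoint N & M']]) ->
  strong_module c N.
Proof.
move=> n0 mN H; apply/and3P; split=> //; apply/forallP => M'; apply/implyP; exact: H.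
Qed.

Lemma strong1 x : strong_module c [set x].
Proof.
apply: strongI.
- by apply/set0Pn; exists x; rewrite inE.
- by apply: moduleI => v u u' _; rewrite !inE => /eqP -> /eqP ->.
move=> M' _; case xM: (x \in M'); first by rewrite sub1set xM.
by apply/or3P; apply: Or33; rewrite disjoints1 xM.
Qed.

Lemma PmaxP (M A : {set V}) : A \in Pmax c M ->
  [/\ strong_module c A, A \proper M & forall N', strong_module c N' -> N' \proper M ->
     A \subset N' -> N' = A].
Proof.
rewrite inE => /and3P [sA pA /forallP H]; split=> // N' sN' pN' AN'.
by apply/eqP; move: (H N'); rewrite sN' pN' AN'.
Qed.

Lemma Pmax_disj (M A B : {set V}) : A \in Pmax c M -> B \in Pmax c M -> A != B ->
  [disjoint A & B].
Proof.
move=> /PmaxP [sA pA mA] /PmaxP [sB pB mB] nAB.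
have [_ mdB _] := strongP sB.
case/strongP: (sA) => _ _ /(_ B mdB) /or3P [AB|BA|//].
  by move: nAB; rewrite (mA B sB pB AB) eqxx.
by move: nAB; rewrite (mB A sA pA BA) eqxx.
Qed.

Lemma Pmax_cover (M : {set V}) x : 1 < #|M| -> x \in M ->
  exists2 A, A \in Pmax c M & x \in A.
Proof.
move=> M1 xM.
pose P := fun N : {set V} => [/\ strong_module c N, N \proper M & x \in N].
have P1 : P [set x].
  split; [exact: strong1 | | by rewrite inE].
  rewrite properEneq sub1set xM andbT; apply/eqP => e; move: M1; by rewrite -e cards1.
have [N [[sN pN xN] mN]] := min_exists (fun N : {set V} => #|~: N|) P1.
exists N => //; rewrite inE sN pN /=; apply/forallP => N'; apply/implyP => /and3P [sN' pN' NN'].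
have := mN N' (And3 sN' pN' (subsetP NN' x xN)).
move=> le; rewrite eq_sym eqEcard NN' /=.
have := cardsC N; have := cardsC N'; lia.
Qed.

End Mod.


Section Quot.
Variables (V : finType) (k : nat) (c : V -> V -> 'I_k).
Hypothesis csym : forall u v, u != v -> c u v = c v u.
Variables (M : {set V}) (x0 : V).
Hypothesis sM : strong_module c M.

Definition rep (A : qvert c M) : V := odflt x0 [pick x in val A].

Lemma qv_Pmax (A : qvert c M) : 1 < #|M| -> val A \in Pmax c M.
Proof. by move=> M1; have := valP A; move: (val A) => X; rewrite /qverts M1. Qed.

Lemma qv_small (A : qvert c M) : ~~ (1 < #|M|) -> val A = M.
Proof. by move=> M1; have := valP A; move: (val A) => X; rewrite /qverts (negbTE M1) inE => /eqP. Qed.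

Lemma qv_ne (A : qvert c M) : val A != set0.
Proof.
case: (boolP (1 < #|M|)) => M1.
  by have [/strongP [] ] := PmaxP (qv_Pmax A M1).
by rewrite qv_small //; case/strongP: sM.
Qed.

Lemma rep_in (A : qvert c M) : rep A \in val A.
Proof.
rewrite /rep; case: pickP => [x -> //|H].
by case/set0Pn: (qv_ne A) => x xA; move: (H x); rewrite xA.
Qed.

Lemma qv_sub (A : qvert c M) : val A \subset M.
Proof.
case: (boolP (1 < #|M|)) => M1.
  by have [_ /proper_sub //] := PmaxP (qv_Pmax A M1).
by rewrite qv_small.
Qed.

Lemma qv_neq (A B : qvert c M) : A != B -> 1 < #|M| /\ [disjoint val A & val B].
Proof.
move=> nAB; case: (boolP (1 < #|M|)) => M1.
  split=> //; apply: Pmax_disj (qv_Pmax A M1) (qv_Pmax B M1) _.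
  by apply: contra nAB => /eqP e; apply/eqP; apply: val_inj.
have e : A = B by apply: val_inj; rewrite !qv_small.
by rewrite e eqxx in nAB.
Qed.

Lemma mem_block (A B : qvert c M) x : x \in val A -> x \in val B -> A = B.
Proof.
move=> xA xB; apply/eqP; apply: contraT => nAB.
by have [_ d] := qv_neq nAB; move: (disjointFr d xA); rewrite xB.
Qed.

Lemma rep_inj : injective rep.
Proof. move=> A B e; apply: (mem_block (rep_in A)); rewrite e; exact: rep_in. Qed.

Lemma qv_module (A : qvert c M) : is_module c (val A).
Proof.
case: (boolP (1 < #|M|)) => M1.
  by have [/strongP [] ] := PmaxP (qv_Pmax A M1).
by rewrite qv_small //; case/strongP: sM.
Qed.

Lemma cross (A B : qvert c M) u v : A != B -> u \in val A -> v \in val B ->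
  c u v = c (rep A) (rep B).
Proof.
move=> nAB uA vB; have [_ d] := qv_neq nAB.
have vA : v \notin val A by rewrite (disjointFl d vB).
have rB : rep A \notin val B by rewrite (disjointFr d (rep_in A)).
rewrite (moduleP (qv_module A) vA uA (rep_in A)).
have n1 : rep A != v by apply/eqP => e; move: vA; rewrite -e rep_in.
rewrite (csym n1) (moduleP (qv_module B) rB vB (rep_in B)) csym //.
by apply/eqP => e; move: rB; rewrite -e rep_in.
Qed.

Lemma qedge_rep i (A B : qvert c M) : A != B -> qedge i A B = (c (rep A) (rep B) == i).
Proof.
move=> nAB; rewrite /qedge; apply/idP/idP.
  by move/forall_inP/(_ _ (rep_in A))/forall_inP/(_ _ (rep_in B)).
move=> H; apply/forall_inP => u uA; apply/forall_inP => v vB.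
by rewrite (cross nAB uA vB).
Qed.

End Quot.


Lemma rank_exists (W : finType) (f : W -> nat) : injective f ->
  exists r : W -> 'I_#|W|, bijective r /\ forall x y, (r x < r y) = (f x < f y).
Proof.
move=> finj.
pose rk x := #|[set y | f y < f x]|.
have rklt : forall x, rk x < #|W|.
  move=> x; rewrite -cardsT; apply: proper_card; apply/properP; split; first exact: subsetT.
  by exists x; rewrite ?inE // ltnn.
have mono : forall x y, f x < f y -> rk x < rk y.
  move=> x y lt; apply: proper_card; apply/properP; split.
    by apply/subsetP => z; rewrite !inE => h; apply: ltn_trans h lt.
  by exists x; rewrite !inE ?lt // ltnn.
pose r x := Ordinal (rklt x).
have req : forall x y, (r x < r y) = (f x < f y).
  move=> x y; case: (ltngtP (f x) (f y)) => h.
  - exact: mono.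
  - by apply/negbTE; rewrite -leqNgt ltnW //; apply: mono.
  - by rewrite (finj _ _ h) ltnn.
have rinj : injective r.
  move=> x y e; apply: finj; case: (ltngtP (f x) (f y)) => // h.
    by move: (req x y); rewrite e ltnn h.
  by move: (req y x); rewrite e ltnn h.
exists r; split=> //; apply: inj_card_bij rinj _; by rewrite card_ord.
Qed.

Section NR.
Variables (V : finType) (k : nat) (c : V -> V -> 'I_k).
Hypothesis csym : forall u v, u != v -> c u v = c v u.
Variables (l : V -> 'I_#|V|) (linj : injective l).
Hypothesis hp : forall i, exists pi, simple_perm_graph (fun u v => c u v == i) l pi.

Definition NR u v w := [|| c u v == c u w, c u v == c v w | c u w == c v w].

Lemma T2 u v w : l u < l v -> l v < l w -> NR u v w.
Proof.
move=> luv lvw.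
have [pi hpi] := hp (c u w).
have luw : l u < l w := ltn_trans luv lvw.
have ne : forall a b, l a < l b -> a != b.
  by move=> a b h; apply/eqP => e; move: h; rewrite e ltnn.
have h1 := hpi w u luw; rewrite /= (csym (ne _ _ luw)) eqxx in h1.
rewrite /NR; case: (ltnP ((pi^-1)%g (l v)) ((pi^-1)%g (l u))) => h.
  have h2 := hpi v u luv; rewrite /= h in h2.
  by rewrite (csym (ne _ _ luv)) (eqP h2) eqxx.
have h3 := hpi w v lvw; rewrite /= (leq_trans (esym h1 : _ < _) h) in h3.
by rewrite (csym (ne _ _ lvw)) (eqP h3) eqxx !orbT.
Qed.

Lemma NR12 u v w : u != v -> v != w -> u != w -> NR u v w -> NR v u w.
Proof.
move=> uv vw uw; rewrite /NR (csym uv).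
by case/or3P=> /eqP ->; rewrite eqxx ?orbT.
Qed.

Lemma NR23 u v w : u != v -> v != w -> u != w -> NR u v w -> NR u w v.
Proof.
move=> uv vw uw; rewrite /NR (csym vw).
by case/or3P=> /eqP ->; rewrite eqxx ?orbT.
Qed.

Lemma norainbow u v w : u != v -> v != w -> u != w -> NR u v w.
Proof.
move=> uv vw uw.
have ne : forall a b, a != b -> nat_of_ord (l a) != l b.
  by move=> a b; apply: contra => /eqP e; apply/eqP; apply: linj; apply: val_inj.
have vu : v != u by rewrite eq_sym. have wv : w != v by rewrite eq_sym.
have wu : w != u by rewrite eq_sym.
case: (ltngtP (l u) (l v)) => h1; last by move: (ne _ _ uv); rewrite h1 eqxx.
- case: (ltngtP (l v) (l w)) => h2; last by move: (ne _ _ vw); rewrite h2 eqxx.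
  + exact: T2.
  + case: (ltngtP (l u) (l w)) => h3; last by move: (ne _ _ uw); rewrite h3 eqxx.
    * by apply: NR23 => //; apply: T2.
    * by apply: NR23 => //; apply: NR12 => //; apply: T2.
- case: (ltngtP (l u) (l w)) => h2; last by move: (ne _ _ uw); rewrite h2 eqxx.
  + by apply: NR12 => //; apply: T2.
  + case: (ltngtP (l v) (l w)) => h3; last by move: (ne _ _ vw); rewrite h3 eqxx.
    * by apply: NR12 => //; apply: NR23 => //; apply: T2.
    * by apply: NR23 => //; apply: NR12 => //; apply: NR23 => //; apply: T2.
Qed.
End NR.


Section Bad.
Variables (V : finType) (k : nat) (c : V -> V -> 'I_k).
Hypothesis csym : forall u v, u != v -> c u v = c v u.
Hypothesis nrV : forall u v w, u != v -> v != w -> u != w -> NR c u v w.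
Variables (M : {set V}) (x0 : V).
Hypothesis sM : strong_module c M.
Hypothesis M1 : 1 < #|M|.

Local Notation W := (qvert c M).
Definition col (A B : W) := c (rep x0 A) (rep x0 B).

Lemma colsym (A B : W) : A != B -> col A B = col B A.
Proof.
move=> nAB; apply: csym; apply: contra nAB => /eqP e; apply/eqP; exact: (rep_inj sM e).
Qed.

Lemma colnr (A B C : W) : A != B -> B != C -> A != C ->
  [|| col A B == col A C, col A B == col B C | col A C == col B C].
Proof.
have ne : forall X Y : W, X != Y -> rep x0 X != rep x0 Y.
  by move=> X Y; apply: contra => /eqP e; apply/eqP; exact: (rep_inj sM e).
move=> h1 h2 h3; exact: (nrV (ne _ _ h1) (ne _ _ h2) (ne _ _ h3)).
Qed.

Lemma blk_ex x : x \in M -> exists B : W, x \in val B.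
Proof.
case/(Pmax_cover c M1) => P PP xP.
have PQ : P \in qverts c M by rewrite /qverts M1.
by exists (exist _ P PQ).
Qed.

Lemma crossW (A B : W) u v : A != B -> u \in val A -> v \in val B -> c u v = col A B.
Proof. exact: cross. Qed.

Lemma bad i (A0 B0 : W) : A0 != B0 -> col A0 B0 = i -> ~ conn col i setT -> False.
Proof.
move=> nAB e0 nc.
have [Z [_ Z0 ZT cZ]] := notconn nc.
have [D [A0D cD [Bo BoD]]] : exists D : {set W},
    [/\ A0 \in D, closedin col i setT D & exists Bo, Bo \notin D].
  case A0Z: (A0 \in Z).
    exists Z; split=> //.
    have : Z \proper setT by rewrite properEneq ZT subsetT.
    by case/properP => _ [Bo _ BoZ]; exists Bo.
  exists (setT :\: Z); split; first by rewrite !inE A0Z.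
    exact: (closed_compl colsym cZ).
  by case/set0Pn: Z0 => Bo BoZ; exists Bo; rewrite inE BoZ.
have [U cpU] := comp_exists A0D cD.
case: (cpU) => A0U UD cU mU.
have BoU : Bo \notin U by apply: contra BoD; apply: (subsetP UD).
have B0U : B0 \in U.
  apply: contraT => B0U; move: (cU _ _ A0U (in_setT B0) B0U); by rewrite e0 eqxx.
pose Ub := \bigcup_(A in U) val A.
have memUb : forall (B : W) x, x \in val B -> (x \in Ub) = (B \in U).
  move=> B x xB; apply/bigcupP/idP => [[A AU xA]|BU]; last by exists B.
  by rewrite -(mem_block xA xB).
have UbM : Ub \subset M.
  by apply/subsetP => x /bigcupP [A _ xA]; exact: (subsetP (qv_sub A)).
have homog : forall (A A' B : W), A \in U -> A' \in U -> B \notin U -> col A B = col A' B.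
  move=> A A' B AU A'U BU; exact: (comp_homog colsym colnr cpU (in_setT B) BU AU A'U).
have mUb : is_module c Ub.
  apply: moduleI => v u u' vU uU u'U.
  case vM: (v \in M); last first.
    by apply: (moduleP (let: And3 _ m _ := strongP sM in m)); rewrite ?vM //;
      apply: (subsetP UbM).
  have [B vB] := blk_ex vM.
  case/bigcupP: uU => A AU uA; case/bigcupP: u'U => A' A'U u'A'.
  have BU : B \notin U by rewrite -(memUb _ _ vB).
  have nAvB : A != B by apply: contra BU => /eqP <-.
  have nA'B : A' != B by apply: contra BU => /eqP <-.
  rewrite (crossW nAvB uA vB) (crossW nA'B u'A' vB); exact: homog.
have Ub0 : Ub != set0 by apply/set0Pn; exists (rep x0 A0); rewrite (memUb _ _ (rep_in x0 sM A0)).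
have sUb : strong_module c Ub.
  apply: strongI => // W' mW'.
  apply: NNPP => H.
  have n1 : ~~ (Ub \subset W') by apply/negP => h; apply: H; rewrite h.
  have n2 : ~~ (W' \subset Ub) by apply/negP => h; apply: H; rewrite h orbT.
  have n3 : ~~ [disjoint Ub & W'] by apply/negP => h; apply: H; rewrite h !orbT.
  case/subsetPn: n1 => t tU tW.
  case/subsetPn: n2 => y yW yU.
  case/pred0Pn: n3 => z /andP [zU zW].
  have {}zW : z \in W' := zW. have {}zU : z \in Ub := zU.
  have [_ _ hM] := strongP sM.
  case/or3P: (hM W' mW') => [MW|WM|dMW].
  - by move: tW; rewrite (subsetP MW) // (subsetP UbM).
  - have yM := subsetP WM y yW.
    have [By yB] := blk_ex yM.
    have ByU : By \notin U by rewrite -(memUb _ _ yB).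
    have [Bz zB] := blk_ex (subsetP UbM z zU).
    have BzU : Bz \in U by rewrite -(memUb _ _ zB).
    have [Bt tB] := blk_ex (subsetP UbM t tU).
    have BtU : Bt \in U by rewrite -(memUb _ _ tB).
    have strB : forall B : W, strong_module c (val B).
      by move=> B; have [] := PmaxP (qv_Pmax B M1).
    have BzW : val Bz \subset W'.
      case/strongP: (strB Bz) => _ _ /(_ W' mW') /or3P [//|WBz|dz].
        by move: ByU; rewrite (mem_block yB (subsetP WBz y yW)) BzU.
      by rewrite (disjointFr dz zB) in zW.
    have BtW : ~~ (val Bt \subset W') by apply/negP => h; move: tW; rewrite (subsetP h).
    have h1 : Bz \in [set A : W | val A \subset W'] by rewrite inE.
    have h2 : Bt \notin [set A : W | val A \subset W'] by rewrite inE.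
    have [a [b [aU aT bU bT eab]]] := comp_split colsym cpU BzU h1 BtU h2.
    rewrite inE in aT; rewrite inE in bT.
    have rbW : rep x0 b \notin W'.
      case/strongP: (strB b) => _ _ /(_ W' mW') /or3P [bW|Wb|db].
      + by rewrite bW in bT.
      + by move: ByU; rewrite (mem_block yB (subsetP Wb y yW)) bU.
      + by rewrite (disjointFr db (rep_in x0 sM b)).
    have e1 := moduleP mW' rbW (subsetP aT _ (rep_in x0 sM a)) yW.
    have nByb : By != b by apply: contra ByU => /eqP ->.
    rewrite (crossW nByb yB (rep_in x0 sM b)) in e1.
    have := cU _ _ bU (in_setT By) ByU.
    have eab' : c (rep x0 a) (rep x0 b) = i := eab.
    by rewrite -(colsym nByb) -e1 eab' eqxx.
  - by rewrite (disjointFr dMW (subsetP UbM z zU)) in zW.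
have pUbM : Ub \proper M.
  rewrite properEneq UbM andbT; apply/eqP => e.
  have h : rep x0 Bo \in Ub by rewrite e; exact: (subsetP (qv_sub Bo) _ (rep_in x0 sM Bo)).
  rewrite (memUb _ _ (rep_in x0 sM Bo)) in h.
  by rewrite h in BoU.
have [_ _ mA0] := PmaxP (qv_Pmax A0 M1).
have A0Ub : val A0 \subset Ub.
  by apply/subsetP => x xA; rewrite (memUb _ _ xA).
have := mA0 _ sUb pUbM A0Ub => eU.
have h : rep x0 B0 \in val A0 by rewrite -eU (memUb _ _ (rep_in x0 sM B0)) B0U.
by move: nAB; rewrite (mem_block (rep_in x0 sM B0) h) eqxx.
Qed.

End Bad.


Theorem corollary4p11 (V : finType) (k : nat) (c : V -> V -> 'I_k) :
  complete_colored c ->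
  edge_colored_perm_graph (fun i : 'I_k => fun u v : V => c u v == i) ->
  forall M : {set V}, prime_module c M ->
    edge_colored_perm_graph (@qedge V k c M) /\
    (2 < #|M| -> #|qcolors c M| = 2).
Proof.
move=> [_ [csym _]] [l [lbij hp]] M [sM nser].
have linj := bij_inj lbij.
have nrV := fun u v w => @norainbow V k c csym l linj hp u v w.
have [M0 _ _] := strongP sM.
case/set0Pn: (M0) => x0 x0M.
split.
  have rinj : injective (fun A : qvert c M => nat_of_ord (l (rep x0 A))).
    by move=> A B /val_inj /linj /(rep_inj sM).
  have [lq [lqbij lqeq]] := rank_exists rinj.
  exists lq; split => // i.
  have [pi hpi] := hp i.
  have finj : injective (fun A : qvert c M => nat_of_ord ((pi^-1)%g (l (rep x0 A)))).
    by move=> A B /val_inj /perm_inj /linj /(rep_inj sM).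
  have [rho [rbij req]] := rank_exists finj.
  case: lqbij => lqi can1 can2.
  have ginj : injective (fun x => rho (lqi x)).
    by move=> x y /(bij_inj rbij) /(can_inj can2).
  exists ((perm ginj)^-1)%g => A B lt.
  rewrite invgK !permE /= !can1 req.
  have nAB : A != B by apply/eqP => e; move: lt; rewrite e ltnn.
  rewrite (qedge_rep csym x0 sM i nAB).
  by apply: (hpi (rep x0 A) (rep x0 B)); rewrite -lqeq.
move=> M2; have M1 : 1 < #|M| by apply: ltnW.
have [Ax xA] := blk_ex c M1 x0M.
have [_ pAx _] := PmaxP (qv_Pmax Ax M1).
move/properP: pAx => [_ [y yM yA]].
have [Ay yAy] := blk_ex c M1 yM.
have nxy : Ax != Ay by apply/eqP => e; move: yA; rewrite e yAy.
have colmem : forall A B : qvert c M, A != B -> col x0 A B \in qcolors c M.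
  move=> A B nAB; rewrite inE; apply/existsP; exists A; apply/existsP; exists B.
  rewrite nAB /=.
  rewrite (qedge_rep csym x0 sM _ nAB).
  by [].
have qcolP : forall i, i \in qcolors c M -> exists A B : qvert c M, A != B /\ col x0 A B = i.
  move=> i; rewrite /qcolors inE => /existsP [A /existsP [B /andP [nAB]]].
  by rewrite (qedge_rep csym x0 sM _ nAB) => /eqP e; exists A, B.
have ge2 : 2 <= #|qcolors c M|.
  apply: contraT; rewrite -ltnNge ltnS => le1; exfalso; apply: nser.
  split=> //; split.
    have s2 : [set val Ax; val Ay] \subset qverts c M.
      by apply/subsetP => X; rewrite !inE => /orP [] /eqP ->; apply: valP.
    have := subset_leq_card s2; rewrite cards2.
    have -> : (val Ax != val Ay) by apply: contra nxy => /eqP /val_inj ->.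
    by [].
  exists (col x0 Ax Ay) => A B nAB; rewrite (qedge_rep csym x0 sM _ nAB).
  by apply/eqP; apply: (card_le1_eqP le1); apply: colmem.
have le2 : #|qcolors c M| <= 2.
  apply: contraT; rewrite -ltnNge => ge3; exfalso.
  have [i1 i1Q] : exists i1, i1 \in qcolors c M.
    by apply/set0Pn; rewrite -card_gt0; apply: leq_trans ge3.
  have h1 := cardsD1 i1 (qcolors c M); rewrite i1Q in h1.
  have [i2 i2Q] : exists i2, i2 \in qcolors c M :\ i1.
    by apply/set0Pn; rewrite -card_gt0; lia.
  have h2 := cardsD1 i2 (qcolors c M :\ i1); rewrite i2Q in h2.
  have [i3 i3Q] : exists i3, i3 \in (qcolors c M :\ i1) :\ i2.
    by apply/set0Pn; rewrite -card_gt0; lia.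
  move: i2Q i3Q; rewrite !in_setD1 => /andP [n21 i2Q] /and3P [n32 n31 i3Q].
  have cn : forall i, i \in qcolors c M -> conn (@col V k c M x0) i [set: qvert c M].
    move=> i iQ; apply: NNPP => nc; have [A [B [nAB eAB]]] := qcolP i iQ.
    exact: (bad csym nrV sM M1 nAB eAB nc).
  have T1 : 1 < #|[set: qvert c M]|.
    have := subset_leq_card (subsetT [set Ax; Ay]); rewrite cards2 nxy; by [].
  apply: (gallai (colsym csym x0 sM) (colnr nrV x0 sM) (leqnn _) T1
            (p := i1) (q := i2) (r := i3));
    first [ exact: cn | by rewrite eq_sym ].
by apply/eqP; rewrite eqn_leq le2 ge2.
Qed.
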